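(* Under the three-receiver coding module below, at the beginning of any slot $t>0$, at least one of the two receivers not labeled $L$ has an empty unsolved set, i.e., satisfies $H_i=D_i$.
   Context: A sender broadcasts packets $\mathbf{p}_1,\mathbf{p}_2,\dots$ (indexed by arrival order, vectors over $\mathbb{F}_3$) to three receivers $1,2,3$ over a slotted erasure broadcast channel; each slot it transmits at most one linear combination of arrived packets, each receiver either receives it or suffers an erasure, and perfect feedback gives the sender every receiver's knowledge. The rank of a receiver is the dimension of the space of linear combinations it knows. Receiver $i$ has heard of a packet if it knows some linear combination involving that packet (with nonzero coefficient); $H_i$ is the set of packets it has heard of and $D_i$ the set it has decoded; $H_i\setminus D_i$ is its unsolved set. ''Oldest'' means smallest index. Coding module: labels $L,N,D$ form a permutation of $\{1,2,3\}$; initially $L=1,N=2,D=3,m=0$. Each slot: let $U=\{\mathbf{p}_1,\dots,\mathbf{p}_m\}$ together with $\mathbf{p}_{m+1}$ if it has arrived, and set $S_1=D_N\cap D_D$, $S_2=D_N\cap(H_D\setminus D_D)$, $S_3=D_N\setminus H_D$, $S_4=D_D\setminus D_N$, $S_5=(H_D\setminus D_D)\setminus D_N$, $S_6=U\setminus(H_D\cup D_N)$. Transmit: Case 1 ($\mathbf{p}_{m+1}$ not arrived): if $S_2,S_4$ both nonempty send the sum of their oldest packets; else if $S_3,S_4$ both nonempty send the sum of their oldest packets; else send the oldest packet of the first nonempty set among $S_5,S_6,S_2,S_3,S_4$; if all are empty send nothing. Case 2 ($\mathbf{p}_{m+1}\in S_1$): send $\mathbf{p}_{m+1}$ plus whatever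 Case 1 would send. Case 3 ($\mathbf{p}_{m+1}\in S_2$): send $\mathbf{p}_{m+1}+c\mathbf{p}$ with $\mathbf{p}$ the oldest packet of the first nonempty set among $S_4,S_5,S_6$, where $c=1$ unless $\mathbf{p}\in S_5$, in which case $c\in\{1,2\}$ is chosen so that the combination is innovative to receiver $D$. Case 4 ($\mathbf{p}_{m+1}\in S_3$): send $\mathbf{p}_{m+1}+\mathbf{p}$, $\mathbf{p}$ the oldest packet of the first nonempty set among $S_4,S_5,S_6$. Case 5 ($\mathbf{p}_{m+1}\in S_4$): send $\mathbf{p}_{m+1}+\mathbf{p}$, $\mathbf{p}$ the oldest packet of the first nonempty set among $S_2,S_3,S_6$. (In Cases 3–5, if all listed sets are empty, $\mathbf{p}_{m+1}$ is sent alone.) Case 6 (otherwise): send $\mathbf{p}_{m+1}$. After feedback, update $H_i,D_i$, set $m$ to the maximum rank of the three receivers; among receivers that have decoded all of $\mathbf{p}_1,\dots,\mathbf{p}_m$, label the one with lowest index $L$ (if there is none, assign labels arbitrarily); of the other two receivers, if exactly one has nonempty unsolved set, label it $D$ and the other $N$; otherwise assign $D,N$ arbitrarily. *)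

(* Defs.v *)
From HB Require Import structures.
From mathcomp Require Import all_boot all_order all_algebra.
Set Implicit Arguments. Unset Strict Implicit. Unset Printing Implicit Defensive.
Import Order.TTheory GRing.Theory Num.Theory.
Local Open Scope ring_scope.

(* Packets are indexed from 0: index k stands for packet p_(k+1).
   A linear combination of packets is its coefficient vector, a finite list
   over 'F_3 (coordinates beyond the list are 0). *)
Definition vec := seq 'F_3.
Definition coord (v : vec) (k : nat) : 'F_3 := nth 0 v k.

(* knowledge of a receiver = list of combinations received so far *)
Definition in_span (S : seq vec) (v : vec) : Prop :=
  exists cs : seq 'F_3,
    forall k, coord v k = \sum_(i < size S) cs`_i * coord (nth [::] S i) k.

Definition width (S : seq vec) : nat := \max_(v <- S) size v.

Definition rank (S : seq vec) : nat :=
  \rank (\matrix_(i < size S, j < width S) coord (nth [::] S i) j).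

Definition unitv (k : nat) : vec := rcons (nseq k 0) 1.

Definition comb (k : nat) (c : 'F_3) (j : nat) : vec :=
  mkseq (fun i => (i == k)%:R + c * (i == j)%:R) (maxn k j).+1.

Definition addv (u v : vec) : vec :=
  mkseq (fun i => coord u i + coord v i) (maxn (size u) (size v)).

Definition decoded (S : seq vec) (k : nat) : Prop := in_span S (unitv k).
Definition heard (S : seq vec) (k : nat) : Prop :=
  exists v, in_span S v /\ coord v k != 0.
Definition unsolved_nonempty (S : seq vec) : Prop :=
  exists k, heard S k /\ ~ decoded S k.

Record state := State {
  know : 'I_3 -> seq vec;   (* receivers 1,2,3 are 0,1,2 *)
  lL : 'I_3; lN : 'I_3; lD : 'I_3;
  mm : nat }.

Definition is_init (s : state) : Prop :=
  (forall i, know s i = [::]) /\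
  lL s = 0 :> nat /\ lN s = 1 :> nat /\ lD s = 2 :> nat /\ mm s = 0%N.

Definition nonempty (P : nat -> Prop) : Prop := exists k, P k.
Definition oldest (P : nat -> Prop) (k : nat) : Prop :=
  P k /\ forall j, (j < k)%N -> ~ P j.

Fixpoint first_oldest (Ps : seq (nat -> Prop)) (k : nat) : Prop :=
  match Ps with
  | [::] => False
  | P :: Ps' => (nonempty P /\ oldest P k) \/ (~ nonempty P /\ first_oldest Ps' k)
  end.
Fixpoint all_empty (Ps : seq (nat -> Prop)) : Prop :=
  match Ps with
  | [::] => True
  | P :: Ps' => ~ nonempty P /\ all_empty Ps'
  end.

Section Module.
Variables (n : nat) (s : state).
(* n = number of packets arrived so far (packets 0..n-1) *)
Let N := lN s.
Let D := lD s.
Let m := mm s.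
Definition Dset (i : 'I_3) (k : nat) : Prop := decoded (know s i) k.
Definition Hset (i : 'I_3) (k : nat) : Prop := heard (know s i) k.
Definition Uset (k : nat) : Prop := (k < m)%N \/ (k = m /\ (m < n)%N).
Definition S1 k := Dset N k /\ Dset D k.
Definition S2 k := Dset N k /\ (Hset D k /\ ~ Dset D k).
Definition S3 k := Dset N k /\ ~ Hset D k.
Definition S4 k := Dset D k /\ ~ Dset N k.
Definition S5 k := (Hset D k /\ ~ Dset D k) /\ ~ Dset N k.
Definition S6 k := Uset k /\ ~ (Hset D k \/ Dset N k).

Definition case1 (x : option vec) : Prop :=
  (nonempty S2 /\ nonempty S4 /\
     exists a b, oldest S2 a /\ oldest S4 b /\ x = Some (comb a 1 b))
  \/ (~ (nonempty S2 /\ nonempty S4) /\ nonempty S3 /\ nonempty S4 /\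
     exists a b, oldest S3 a /\ oldest S4 b /\ x = Some (comb a 1 b))
  \/ (~ (nonempty S2 /\ nonempty S4) /\ ~ (nonempty S3 /\ nonempty S4) /\
     exists k, first_oldest [:: S5; S6; S2; S3; S4] k /\ x = Some (unitv k))
  \/ (all_empty [:: S5; S6; S2; S3; S4] /\ x = None).

Definition innovative (v : vec) : Prop := ~ in_span (know s D) v.

Definition transmit (x : option vec) : Prop :=
  (* Case 1 *)
  (~ (m < n)%N /\ case1 x)
  (* Case 2 *)
  \/ ((m < n)%N /\ S1 m /\ exists y, case1 y /\
        x = Some (if y is Some v then addv (unitv m) v else unitv m))
  (* Case 3 *)
  \/ ((m < n)%N /\ S2 m /\
      ((exists k c, first_oldest [:: S4; S5; S6] k /\ (c = 1%N \/ c = 2%N) /\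
          (~ S5 k -> c = 1%N) /\
          (S5 k -> innovative (comb m c%:R k) \/
                   forall c', (c' = 1%N \/ c' = 2%N) -> ~ innovative (comb m c'%:R k)) /\
          x = Some (comb m c%:R k))
       \/ (all_empty [:: S4; S5; S6] /\ x = Some (unitv m))))
  (* Case 4 *)
  \/ ((m < n)%N /\ S3 m /\
      ((exists k, first_oldest [:: S4; S5; S6] k /\ x = Some (comb m 1 k))
       \/ (all_empty [:: S4; S5; S6] /\ x = Some (unitv m))))
  (* Case 5 *)
  \/ ((m < n)%N /\ S4 m /\
      ((exists k, first_oldest [:: S2; S3; S6] k /\ x = Some (comb m 1 k))
       \/ (all_empty [:: S2; S3; S6] /\ x = Some (unitv m))))
  (* Case 6 *)
  \/ ((m < n)%N /\ ~ S1 m /\ ~ S2 m /\ ~ S3 m /\ ~ S4 m /\ x = Some (unitv m)).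
End Module.

Definition receive (e : bool) (x : option vec) (K : seq vec) : seq vec :=
  if e then (if x is Some v then rcons K v else K) else K.

Definition relabel_ok (K : 'I_3 -> seq vec) (m' : nat) (L N D : 'I_3) : Prop :=
  uniq [:: L; N; D] /\
  (let good i := forall k, (k < m')%N -> decoded (K i) k in
   (exists i, good i) -> good L /\ forall i, good i -> (L <= i)%N) /\
  ~ (unsolved_nonempty (K N) /\ ~ unsolved_nonempty (K D)).

(* one slot: n packets arrived, erasure pattern e (e i = true: receiver i receives) *)
Definition step (n : nat) (e : 'I_3 -> bool) (s s' : state) : Prop :=
  exists x, transmit n s x /\
    (forall i, know s' i = receive (e i) x (know s i)) /\
    mm s' = (\max_(i < 3) rank (know s' i))%N /\
    relabel_ok (know s') (mm s') (lL s') (lN s') (lD s').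

(* Main.v *)
Require Import Defs.
From mathcomp Require Import all_boot all_order all_algebra.
Require Import Defs.
From Stdlib Require Import Classical.
Set Implicit Arguments. Unset Strict Implicit. Unset Printing Implicit Defensive.
Import Order.TTheory GRing.Theory Num.Theory.
Local Open Scope ring_scope.

Definition F3 := 'F_3.
Definition spanf (S : seq vec) (f : nat -> 'F_3) : Prop :=
  exists c : nat -> 'F_3, forall k, f k = \sum_(i < size S) c i * coord (nth [::] S i) k.

Lemma in_spanE S v : in_span S v <-> spanf S (coord v).
Proof.
split.
  by case=> cs H; exists (fun i => cs`_i).
case=> c H; exists (mkseq c (size S)) => k; rewrite H.
by apply: eq_bigr => i _; rewrite nth_mkseq.
Qed.

Lemma spanf_ext S f g : (forall k, f k = g k) -> spanf S f -> spanf S g.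
Proof. by move=> E [c H]; exists c => k; rewrite -E. Qed.

Lemma spanf0 S : spanf S (fun _ => 0).
Proof. by exists (fun _ => 0) => k; rewrite big1 // => i _; rewrite mul0r. Qed.

Lemma spanfD S f g : spanf S f -> spanf S g -> spanf S (fun k => f k + g k).
Proof.
case=> c Hc [d Hd]; exists (fun i => c i + d i) => k.
by rewrite Hc Hd -big_split /=; apply: eq_bigr => i _; rewrite mulrDl.
Qed.

Lemma spanfZ S a f : spanf S f -> spanf S (fun k => a * f k).
Proof.
case=> c Hc; exists (fun i => a * c i) => k.
by rewrite Hc mulr_sumr; apply: eq_bigr => i _; rewrite mulrA.
Qed.

Lemma spanfN S f : spanf S f -> spanf S (fun k => - f k).
Proof. move/(spanfZ (-1)); apply: spanf_ext => k; by rewrite mulN1r. Qed.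

Lemma spanfB S f g : spanf S f -> spanf S g -> spanf S (fun k => f k - g k).
Proof. by move=> Hf /spanfN; apply: spanfD. Qed.

Lemma spanf_nth S i : (i < size S)%N -> spanf S (coord (nth [::] S i)).
Proof.
move=> Hi; exists (fun j => (j == i)%:R) => k.
rewrite (bigD1 (Ordinal Hi)) //= eqxx mul1r big1 ?addr0 // => j /negbTE.
move=> Hj; rewrite (_ : (nat_of_ord j == i) = false) ?mul0r //.
Qed.

Lemma spanf_rcons S x f : spanf S f -> spanf (rcons S x) f.
Proof.
case=> c Hc; exists (fun i => if (i < size S)%N then c i else 0) => k.
rewrite size_rcons big_ord_recr /= ltnn mul0r addr0 Hc.
apply: eq_bigr => i _; by rewrite ltn_ord nth_rcons ltn_ord.
Qed.

Lemma spanf_last S x : spanf (rcons S x) (coord x).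
Proof.
have := @spanf_nth (rcons S x) (size S); rewrite size_rcons ltnSn nth_rcons ltnn eqxx.
by apply.
Qed.

Lemma spanf_rconsE S x f : spanf (rcons S x) f ->
  exists a g, spanf S g /\ forall k, f k = g k + a * coord x k.
Proof.
case=> c Hc; exists (c (size S)).
exists (fun k => \sum_(i < size S) c i * coord (nth [::] S i) k); split.
  by exists c.
move=> k; rewrite Hc size_rcons big_ord_recr /= nth_rcons ltnn eqxx.
congr (_ + _); apply: eq_bigr => i _; by rewrite nth_rcons ltn_ord.
Qed.

Lemma spanf_rconsI S x a g : spanf S g -> spanf (rcons S x) (fun k => g k + a * coord x k).
Proof.
move=> Hg; apply: spanfD; first exact: spanf_rcons.
by apply: spanfZ; apply: spanf_last.
Qed.

Lemma spanf_zero S f k : (forall i, (i < size S)%N -> coord (nth [::] S i) k = 0) ->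
  spanf S f -> f k = 0.
Proof.
move=> H [c Hc]; rewrite Hc big1 // => i _; by rewrite H // mulr0.
Qed.

Lemma spanf_nil f k : spanf [::] f -> f k = 0.
Proof. by case=> c ->; rewrite big_ord0. Qed.

Definition dl (k : nat) : nat -> 'F_3 := fun i => (i == k)%:R.

Lemma coord_default v i : (size v <= i)%N -> coord v i = 0.
Proof. by move=> H; rewrite /coord nth_default. Qed.

Lemma coord_unitv k i : coord (unitv k) i = dl k i.
Proof.
rewrite /coord /unitv /dl nth_rcons size_nseq.
by case: ltngtP => H; rewrite ?nth_nseq ?H.
Qed.

Lemma coord_comb a c b i : coord (comb a c b) i = dl a i + c * dl b i.
Proof.
rewrite /coord /comb /dl; case: (ltnP i (maxn a b).+1) => H.
  by rewrite nth_mkseq.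
rewrite nth_default ?size_mkseq //.
have Ha : (i == a) = false by apply/negbTE; rewrite neq_ltn (leq_ltn_trans (leq_maxl a b)) ?orbT.
have Hb : (i == b) = false by apply/negbTE; rewrite neq_ltn (leq_ltn_trans (leq_maxr a b)) ?orbT.
by rewrite Ha Hb mulr0 addr0.
Qed.

Lemma coord_addv u v i : coord (addv u v) i = coord u i + coord v i.
Proof.
rewrite /coord /addv; case: (ltnP i (maxn (size u) (size v))) => H.
  by rewrite nth_mkseq.
rewrite nth_default ?size_mkseq // !nth_default ?addr0 //.
  exact: leq_trans (leq_maxr _ _) H.
exact: leq_trans (leq_maxl _ _) H.
Qed.

Lemma decodedE S k : decoded S k <-> spanf S (dl k).
Proof.
rewrite /decoded; split => [/in_spanE H | H]; [ | apply/in_spanE];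
  by apply: spanf_ext H => i; rewrite coord_unitv.
Qed.

Lemma heardE S k : heard S k -> exists v : vec, spanf S (coord v) /\ coord v k != 0.
Proof. by case=> v [/in_spanE H1 H2]; exists v. Qed.

Lemma heardI S k (v : vec) : spanf S (coord v) -> coord v k != 0 -> heard S k.
Proof. by move=> H1 H2; exists v; split => //; apply/in_spanE. Qed.

Lemma decoded_heard S k : decoded S k -> heard S k.
Proof.
move=> H; apply: (@heardI _ _ (unitv k)); first by apply/in_spanE.
by rewrite coord_unitv /dl eqxx oner_eq0.
Qed.

Lemma decoded_rcons S x k : decoded S k -> decoded (rcons S x) k.
Proof. by move=> /decodedE H; apply/decodedE; apply: spanf_rcons. Qed.

Lemma heard_rcons S x k : heard (rcons S x) k -> heard S k \/ coord x k != 0.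
Proof.
case/heardE=> v [/spanf_rconsE [a [g [Hg E]]] Hv].
have [Hx|Hx] := eqVneq (coord x k) 0; last by right.
left; move: Hv; rewrite E Hx mulr0 addr0 => Hg0.
case: Hg => c Hc.
pose w : vec := mkseq g (\max_(i < size S) size (nth [::] S i)).
have Hw : forall i, coord w i = g i.
  move=> i; rewrite /w /coord; case: (ltnP i (\max_(i0 < size S) size (nth [::] S i0))) => Hi; first by rewrite nth_mkseq.
  rewrite nth_default ?size_mkseq // Hc big1 // => j _.
  rewrite coord_default ?mulr0 //.
  exact: leq_trans (leq_bigmax j) Hi.
apply: (heardI (v:=w)); last by rewrite Hw.
by apply: spanf_ext (fun i => esym (Hw i)) _; exists c.
Qed.

Lemma dec_from S (v : vec) j : spanf S (coord v) -> coord v j != 0 ->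
  (forall k, k != j -> coord v k != 0 -> decoded S k) -> decoded S j.
Proof.
move=> Hv Hj Hk.
have P : forall B, spanf S (fun k => if (k < B)%N && (k != j) then 0 else coord v k).
  elim=> [|B IH]; first by apply: spanf_ext Hv => k.
  case: (eqVneq B j) => [EB|HB].
    apply: spanf_ext IH => k; rewrite EB; case: (eqVneq k j) => [->|Hkj]; rewrite ?andbF //.
    by rewrite /= ltnS (leq_eqVlt k j) (negbTE Hkj).
  case: (eqVneq (coord v B) 0) => HvB.
    apply: spanf_ext IH => k; rewrite ltnS (leq_eqVlt k B); case: (eqVneq k B) => [->|HkB] //=.
    by rewrite ltnn /= HvB; case: (_ != _).
  have /decodedE HdB := Hk B HB HvB.
  have := spanfB IH (spanfZ (coord v B) HdB).
  apply: spanf_ext => k; rewrite /dl ltnS (leq_eqVlt k B); case: (eqVneq k B) => [->|HkB] /=.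
    by rewrite ltnn HB /= mulr1 subrr.
  by rewrite mulr0 subr0.
have := spanfZ (coord v j)^-1 (P (size v)).
move=> H; apply/decodedE; apply: spanf_ext H => k.
rewrite /dl; case: (eqVneq k j) => [->|Hkj] /=.
  by rewrite andbF mulVf.
rewrite andbT; case: ltnP => Hks; first by rewrite mulr0.
by rewrite (coord_default Hks) mulr0.
Qed.

Definition solved S := forall k, heard S k -> decoded S k.

Lemma solvedE S : ~ unsolved_nonempty S <-> solved S.
Proof.
split.
  move=> H k Hk; apply: NNPP => Hd; apply: H; by exists k.
by move=> H [k [Hk Hd]]; apply: Hd; apply: H.
Qed.

Lemma solved_rcons S x j : solved S ->
  (forall i, i != j -> coord x i != 0 -> decoded S i) -> solved (rcons S x).
Proof.
move=> HS Hx i /heard_rcons [/HS Hi|Hi]; first exact: decoded_rcons.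
case: (eqVneq i j) Hi => [->|Hij] Hi; last by apply: decoded_rcons; apply: Hx.
apply: (dec_from (spanf_last S x) Hi).
by move=> k Hk Hxk; apply: decoded_rcons; apply: Hx.
Qed.

Lemma unsolved_two S j : heard S j -> ~ decoded S j ->
  exists j', j' != j /\ heard S j' /\ ~ decoded S j'.
Proof.
move=> /heardE [v [Hv Hvj]] Hd; apply: NNPP => Hn; apply: Hd.
apply: (dec_from Hv Hvj) => k Hkj Hvk; apply: NNPP => Hdk; apply: Hn.
exists k; split => //; split => //; exact: heardI Hv Hvk.
Qed.

Definition supp_le (S : seq vec) (M : nat) :=
  forall i k, (i < size S)%N -> (M < k)%N -> coord (nth [::] S i) k = 0.

Lemma supp_le_spanf S M f k : supp_le S M -> spanf S f -> (M < k)%N -> f k = 0.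
Proof. by move=> H Hf Hk; apply: spanf_zero Hf => i Hi; apply: H. Qed.

Lemma heard_le S M k : supp_le S M -> heard S k -> (k <= M)%N.
Proof.
move=> H /heardE [v [Hv Hvk]]; rewrite leqNgt; apply/negP => Hk.
by move: Hvk; rewrite (supp_le_spanf H Hv Hk) eqxx.
Qed.

Lemma decoded_le S M k : supp_le S M -> decoded S k -> (k <= M)%N.
Proof. by move=> H /decoded_heard; apply: heard_le. Qed.

Lemma supp_rcons S x M : supp_le S M -> (forall k, (M < k)%N -> coord x k = 0) ->
  supp_le (rcons S x) M.
Proof.
move=> H Hx i k; rewrite size_rcons ltnS nth_rcons => Hi Hk.
rewrite leq_eqVlt in Hi; case/orP: Hi => [/eqP ->|Hi].
  by rewrite ltnn eqxx; apply: Hx.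
by rewrite Hi; apply: H.
Qed.

Lemma supp_mono S M M' : (M <= M')%N -> supp_le S M -> supp_le S M'.
Proof. by move=> HM H i k Hi Hk; apply: H => //; apply: leq_ltn_trans Hk. Qed.

Lemma supp_nil M : supp_le [::] M.
Proof. by []. Qed.

Lemma solved_bound S M : supp_le S M -> (forall k, (k < M)%N -> decoded S k) -> solved S.
Proof.
move=> HS HM k Hk; have := heard_le HS Hk; rewrite leq_eqVlt => /orP [/eqP Ek|]; last exact: HM.
case/heardE: (Hk) => v [Hv Hvk]; apply: (dec_from Hv Hvk) => k' Hk' Hvk'.
apply: HM; have := heard_le HS (heardI Hv Hvk'); rewrite leq_eqVlt => /orP [/eqP E|//].
by move: Hk'; rewrite E Ek eqxx.
Qed.

Definition Amx (S : seq vec) : 'M['F_3]_(size S, width S) :=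
  \matrix_(i < size S, j < width S) coord (nth [::] S i) j.

Lemma rankE S : rank S = \rank (Amx S).
Proof. by []. Qed.

Definition Bmx (S : seq vec) M : 'M['F_3]_(size S, M.+1) :=
  \matrix_(i < size S, j < M.+1) coord (nth [::] S i) j.
Definition Cmx W M : 'M['F_3]_(M.+1, W) := \matrix_(j < M.+1, l < W) (j == l :> nat)%:R.

Lemma factorBC S M : supp_le S M -> Amx S = Bmx S M *m Cmx (width S) M.
Proof.
move=> HS; apply/matrixP => i l; rewrite !mxE.
case: (ltnP l M.+1) => Hl.
  rewrite (bigD1 (Ordinal Hl)) //= !mxE eqxx mulr1 big1 ?addr0 // => j Hj.
  rewrite !mxE; suff -> : (nat_of_ord j == l) = false by rewrite mulr0.
  by apply/negbTE; apply: contra Hj => /eqP E; apply/eqP/val_inj.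
rewrite HS // big1 // => j _; rewrite !mxE.
suff -> : (nat_of_ord j == l) = false by rewrite mulr0.
by apply/negbTE; rewrite neq_ltn (leq_trans (ltn_ord j) Hl).
Qed.

Lemma rank_supp S M : supp_le S M -> (rank S <= M.+1)%N.
Proof.
move=> HS; rewrite rankE (factorBC HS).
exact: leq_trans (mxrankM_maxr _ _) (rank_leq_row _).
Qed.

Lemma rank_full S M : supp_le S M -> (M.+1 <= rank S)%N ->
  forall k, (k <= M)%N -> decoded S k.
Proof.
move=> HS; rewrite rankE (factorBC HS) => Hr k Hk.
have HB : row_full (Bmx S M).
  rewrite /row_full eqn_leq rank_leq_col /=.
  exact: leq_trans Hr (mxrankM_maxl _ _).
case/row_fullP: HB => X HX.
pose k0 : 'I_M.+1 := Ordinal (Hk : (k < M.+1)%N).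
apply/decodedE.
exists (fun n => \sum_(j < size S) (n == j :> nat)%:R * X k0 j) => l.
have Hc : forall i : 'I_(size S),
    \sum_(j < size S) (i == j :> nat)%:R * X k0 j = X k0 i.
  move=> i; rewrite (bigD1 i) //= eqxx mul1r big1 ?addr0 // => j Hj.
  suff -> : (nat_of_ord i == j) = false by rewrite mul0r.
  by apply/negbTE; apply: contra Hj => /eqP E; apply/eqP/val_inj.
under eq_bigr do rewrite Hc.
case: (ltnP l M.+1) => Hl.
  move/matrixP: HX => /(_ k0 (Ordinal Hl)); rewrite !mxE /dl => HX.
  have E : (k0 == Ordinal Hl) = (l == k) by rewrite eq_sym.
  rewrite -E -HX; by apply: eq_bigr => i _; rewrite mxE.
rewrite /dl (_ : (l == k) = false); last first.
  by apply/negbTE; rewrite neq_ltn (leq_ltn_trans Hk Hl) orbT.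
rewrite big1 // => i _; by rewrite HS ?mulr0.
Qed.

Lemma size_width S i : (i < size S)%N -> (size (nth [::] S i) <= width S)%N.
Proof. by move=> Hi; apply: (@leq_bigmax_seq _ _ xpredT size) => //; apply: mem_nth. Qed.

Lemma rank_dec S M : (forall k, (k < M)%N -> decoded S k) -> (M <= rank S)%N.
Proof.
move=> HM; case: M HM => [//|M] HM.
have HW : (M < width S)%N.
  rewrite ltnNge; apply/negP => HW.
  have /decodedE [c Hc] := HM M (ltnSn M).
  move: (Hc M); rewrite /dl eqxx big1 => [|i _]; first by move/eqP; rewrite oner_eq0.
  by rewrite coord_default ?mulr0 // (leq_trans (size_width _) HW).
pose E : 'M['F_3]_(M.+1, width S) := \matrix_(k < M.+1, l < width S) (k == l :> nat)%:R.
have HE : (E <= Amx S)%MS.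
  apply/row_subP => k; apply/submxP.
  have /decodedE [c Hc] := HM k (ltn_ord k).
  exists (\row_(i < size S) c i); apply/rowP => l; rewrite !mxE eq_sym.
  have := Hc l; rewrite /dl => ->; by apply: eq_bigr => i _; rewrite !mxE.
rewrite rankE; apply: leq_trans (mxrankS HE).
apply: (@leq_trans (\rank (1%:M : 'M['F_3]_M.+1))); first by rewrite mxrank1.
have <- : E *m E^T = 1%:M.
  apply/matrixP => i j; rewrite !mxE.
  have Hi : (i < width S)%N by apply: leq_trans (ltn_ord i) HW.
  rewrite (bigD1 (Ordinal Hi)) //= !mxE eqxx mul1r big1 ?addr0.
    by rewrite eq_sym.
  move=> l Hl; rewrite !mxE; suff -> : (nat_of_ord i == l) = false by rewrite mul0r.
  by apply/negbTE; apply: contra Hl => /eqP E'; apply/eqP/val_inj.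
exact: mxrankM_maxl.
Qed.

Definition Inv (s : state) : Prop :=
  [/\ uniq [:: lL s; lN s; lD s],
      forall i, supp_le (know s i) (mm s),
      forall k, (k < mm s)%N -> decoded (know s (lL s)) k,
      solved (know s (lN s)) &
      forall a b, S5 s a -> S5 s b -> a = b].

Definition X1 s (x : option vec) :=
  forall v, x = Some v -> forall k, (mm s < k)%N -> coord v k = 0.
Definition Nsafe s (x : option vec) := exists j, forall v, x = Some v ->
  forall i, i != j -> coord v i != 0 -> decoded (know s (lN s)) i.
Definition Bcase s (x : option vec) := exists k, x = Some (comb (mm s) 1 k) /\
  decoded (know s (lD s)) (mm s) /\ (k < mm s)%N /\ ~ nonempty (S2 s).
Definition Dgood s (x : option vec) := forall v, x = Some v -> exists k0,
  (S5 s k0 \/ ~ nonempty (S5 s)) /\ forall i, coord v i != 0 -> i != k0 ->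
    decoded (know s (lN s)) i \/ decoded (rcons (know s (lD s)) v) i.

Lemma receive_cases b x K : receive b x K = K \/
  exists v, x = Some v /\ receive b x K = rcons K v.
Proof. by rewrite /receive; case: b; case: x => [v|]; [right; exists v | left | left | left]. Qed.

Lemma decoded_receive b x K k : decoded K k -> decoded (receive b x K) k.
Proof. by case: (receive_cases b x K) => [->|[v [_ ->]]] //; apply: decoded_rcons. Qed.

Lemma perm3 (a b c : 'I_3) : uniq [:: a; b; c] -> forall i : 'I_3, i = a \/ i = b \/ i = c.
Proof.
move=> H i; move: a b c i H.
by do 4! case=> [[|[|[|//]]] ?]; rewrite //=; (try by left; apply/val_inj);
  (try by right; left; apply/val_inj); (try by right; right; apply/val_inj).
Qed.

Lemma D_solved_of s : Inv s -> ~ nonempty (S2 s) -> solved (know s (lD s)).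
Proof.
case=> _ _ _ _ H5 HS2 k Hk; apply: NNPP => Hd.
have [j' [Hj' [Hh' Hd']]] := unsolved_two Hk Hd.
apply: HS2.
case: (classic (decoded (know s (lN s)) k)) => HNk; first by exists k.
case: (classic (decoded (know s (lN s)) j')) => HNj; first by exists j'.
have E := H5 k j' (conj (conj Hk Hd) HNk) (conj (conj Hh' Hd') HNj).
by move: Hj'; rewrite E eqxx.
Qed.

Lemma solved_receive b x K j : solved K ->
  (forall v, x = Some v -> forall i, i != j -> coord v i != 0 -> decoded K i) ->
  solved (receive b x K).
Proof.
move=> HK Hx; case: (receive_cases b x K) => [->|[v [Ev ->]]] //.
exact: solved_rcons HK (Hx v Ev).
Qed.

Lemma supp_receive b x K M : supp_le K M ->
  (forall v, x = Some v -> forall k, (M < k)%N -> coord v k = 0) ->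
  supp_le (receive b x K) M.
Proof.
move=> HK Hx; case: (receive_cases b x K) => [->|[v [Ev ->]]] //.
exact: supp_rcons HK (Hx v Ev).
Qed.

Lemma coord_comb_nz a c b i : coord (comb a c b) i != 0 -> i = a \/ i = b.
Proof.
rewrite coord_comb /dl; case: (eqVneq i a) => [->|Ha]; first by left.
case: (eqVneq i b) => [->|Hb]; first by right.
by rewrite mulr0 addr0 eqxx.
Qed.

Lemma post s e s' x : Inv s -> X1 s x -> (Nsafe s x \/ Bcase s x) -> Dgood s x ->
  (forall i, know s' i = receive (e i) x (know s i)) ->
  mm s' = (\max_(i < 3) rank (know s' i))%N ->
  relabel_ok (know s') (mm s') (lL s') (lN s') (lD s') -> Inv s'.
Proof.
move=> [Hu Hsupp HL HN H5] HX1 HX2 HDg Hk Hm [Hu' [Hgood Hrel]].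
set m := mm s in HX1 Hsupp HL H5 HX2 HDg *.
have Hsupp' : forall i, supp_le (know s' i) m.
  by move=> i; rewrite Hk; apply: supp_receive.
have HLsol0 : solved (know s (lL s)) by apply: solved_bound (Hsupp _) HL.
have HLsol : solved (know s' (lL s)).
  rewrite Hk; apply: (solved_receive (j := m) HLsol0) => v Ev i Hi Hvi.
  apply: HL; rewrite ltn_neqAle Hi /=; rewrite leqNgt; apply/negP => Hmi.
  by move: Hvi; rewrite (HX1 v Ev i Hmi) eqxx.
have HLdec : forall k, (k < m)%N -> decoded (know s' (lL s)) k.
  by move=> k Hk'; rewrite Hk; apply: decoded_receive; apply: HL.
have Hmm : (m <= mm s')%N.
  rewrite Hm; exact: leq_trans (rank_dec HLdec) (leq_bigmax (lL s)).
have Hex : exists g, forall k, (k < mm s')%N -> decoded (know s' g) k.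
  case: (leqP (mm s') m) => Hm'.
    by exists (lL s) => k Hk'; apply: HLdec; apply: leq_trans Hk' Hm'.
  case: (boolP [exists i, (m < rank (know s' i))%N]) => [/existsP [i Hi]|Hno].
    exists i => k Hk'; apply: (rank_full (Hsupp' i) Hi).
    have : (mm s' <= m.+1)%N.
      by rewrite Hm; apply/bigmax_leqP => j _; apply: rank_supp.
    by move=> H; rewrite -ltnS; apply: leq_trans Hk' H.
  move: Hm'; rewrite Hm ltnNge => /negP []; apply/bigmax_leqP => j _.
  by rewrite leqNgt; apply/negP => Hj; move/existsP: Hno; apply; exists j.
have HL' := (Hgood Hex).1.
have HL'sol : solved (know s' (lL s')).
  exact: solved_bound (supp_mono Hmm (Hsupp' _)) HL'.
have HND : solved (know s' (lN s)) \/ solved (know s' (lD s)).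
  case: HX2 => [[j Hj]|[k [Ex [HDm [Hkm HS2]]]]].
    by left; rewrite Hk; apply: solved_receive HN Hj.
  right; rewrite Hk; apply: (solved_receive (j := k) (D_solved_of (And5 Hu Hsupp HL HN H5) HS2)).
  move=> v; rewrite Ex => -[<-] i Hi /coord_comb_nz [->//|E].
  by move: Hi; rewrite E eqxx.
have Hin : forall i, ~ solved (know s' i) -> i = lN s \/ i = lD s.
  move=> i Hi; case: (perm3 Hu i) => [E|//]; by move: Hi; rewrite E.
have HN' : solved (know s' (lN s')).
  apply: NNPP => Hns.
  have Hds : ~ solved (know s' (lD s')).
    move=> Hds; apply: Hrel; split; last exact: (proj2 (solvedE _) Hds).
    by apply: NNPP => H; apply: Hns; apply/solvedE.
  have Hne : lN s' != lD s' by move: Hu'; rewrite /= !inE; case/andP => _ /andP [] /negP ? _ ; apply/negP.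
  case: (Hin _ Hns) => EN; case: (Hin _ Hds) => ED;
    try by move: Hne; rewrite EN ED eqxx.
    by case: HND => H; [apply: Hns; rewrite EN | apply: Hds; rewrite ED].
  by case: HND => H; [apply: Hds; rewrite ED | apply: Hns; rewrite EN].
have HDs_Ns : forall i, i != lL s -> i != lN s -> i = lD s.
  by move=> i H1 H2; case: (perm3 Hu i) => [E|[E|//]]; [move: H1|move: H2]; rewrite E eqxx.
have H5' : forall a b, S5 s' a -> S5 s' b -> a = b.
  move=> a b /= [[Ha1 Ha2] Ha3] [[Hb1 Hb2] Hb3].
  have HDu : ~ solved (know s' (lD s')) := fun H => Ha2 (H _ Ha1).
  have HneND : lN s' != lD s'.
    by move: Hu'; rewrite /= !inE; case/andP => _ /andP [] /negP ? _ ; apply/negP.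
  have HneLD : lL s' != lD s'.
    by move: Hu'; rewrite /= !inE; case/andP => /norP [_ /negP ?] _; apply/negP.
  case: (Hin _ HDu) => ED.
  -
    have HBc : Bcase s x.
      case: HX2 => // [[j Hj]]; exfalso; apply: HDu; rewrite ED Hk.
      exact: solved_receive HN Hj.
    case: HBc => k [Ex [HDm [Hkm _]]].
    have T : forall c, heard (know s' (lD s')) c -> ~ decoded (know s' (lD s')) c ->
        c = m \/ c = k.
      move=> c; rewrite ED Hk; case: (receive_cases (e (lN s)) x (know s (lN s))) => [->|[v [Ev ->]]].
        by move=> /HN ? [].
      move=> /heard_rcons [/HN /(decoded_rcons v) ? []//|].
      by move: Ev; rewrite Ex => -[<-] /coord_comb_nz.
    have HN'LD : lN s' = lL s \/ lN s' = lD s.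
      case: (perm3 Hu (lN s')) => [E|[E|E]]; [by left | | by right].
      by move: HneND; rewrite E ED eqxx.
    case: HN'LD => EN'.
    + have Hdk : decoded (know s' (lN s')) k by rewrite EN'; apply: HLdec.
      case: (T a Ha1 Ha2) => [->|Ea]; last by move: Ha3; rewrite Ea.
      case: (T b Hb1 Hb2) => [->|Eb] //; by move: Hb3; rewrite Eb.
    + have Hdm : decoded (know s' (lN s')) m by rewrite EN' Hk; apply: decoded_receive.
      case: (T a Ha1 Ha2) => [Ea|->]; first by move: Ha3; rewrite Ea.
      case: (T b Hb1 Hb2) => [Eb|->] //; by move: Hb3; rewrite Eb.
  - have HN'LN : lN s' = lL s \/ lN s' = lN s.
      case: (perm3 Hu (lN s')) => [E|[E|E]]; [by left | by right |].
      by move: HneND; rewrite E ED eqxx.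
    case: HN'LN => EN'.
    + have Tm : forall c, heard (know s' (lD s')) c -> ~ decoded (know s' (lN s')) c -> c = m.
        move=> c Hc Hdc; have := heard_le (Hsupp' _) Hc; rewrite leq_eqVlt => /orP [/eqP //|Hcm].
        by case: Hdc; rewrite EN'; apply: HLdec.
      by rewrite (Tm a Ha1 Ha3) (Tm b Hb1 Hb3).
    + move: Ha1 Ha2 Ha3 Hb1 Hb2 Hb3; rewrite /Hset /Dset ED EN' !Hk.
      have HdN : forall c, ~ decoded (receive (e (lN s)) x (know s (lN s))) c ->
          ~ decoded (know s (lN s)) c.
        by move=> c H1 H2; apply: H1; apply: decoded_receive.
      case: (receive_cases (e (lD s)) x (know s (lD s))) => [->|[v [Ev ->]]].
        move=> Ha1 Ha2 /HdN Ha3 Hb1 Hb2 /HdN Hb3.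
        exact: H5 (conj (conj Ha1 Ha2) Ha3) (conj (conj Hb1 Hb2) Hb3).
      have [k0 [Hk0 Hg]] := HDg v Ev.
      have G : forall c, heard (rcons (know s (lD s)) v) c ->
          ~ decoded (rcons (know s (lD s)) v) c ->
          ~ decoded (know s (lN s)) c -> S5 s c \/ c = k0.
        move=> c /heard_rcons [Hc|Hc] Hd1 Hd2.
          left; split => //; split => // Hd; apply: Hd1; exact: decoded_rcons.
        case: (eqVneq c k0) => [->|Hck]; first by right.
        by case: (Hg c Hc Hck).
      move=> Ha1 Ha2 /HdN Ha3 Hb1 Hb2 /HdN Hb3.
      case: (G a Ha1 Ha2 Ha3) => [Sa|->]; case: (G b Hb1 Hb2 Hb3) => [Sb|->] //.
      * exact: H5.
      * case: Hk0 => [Sk|Hne]; [exact: H5 | by case: Hne; exists a].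
      * case: Hk0 => [Sk|Hne]; [exact: H5 | by case: Hne; exists b].
by split; [exact: Hu' | move=> i; exact: supp_mono Hmm (Hsupp' i) | exact: HL' | exact: HN' | exact: H5'].
Qed.

Lemma oldestP (P : nat -> Prop) k : oldest P k -> P k.
Proof. by case. Qed.

Lemma fo3 (P1 P2 P3 : nat -> Prop) k : first_oldest [:: P1; P2; P3] k ->
  P1 k \/ (~ nonempty P1 /\ P2 k) \/ (~ nonempty P1 /\ ~ nonempty P2 /\ P3 k).
Proof.
rewrite /=; case=> [[_ /oldestP]|[H1 [[_ /oldestP]|[H2 [[_ /oldestP]|[_ []]]]]]]; tauto.
Qed.

Lemma fo_mem (Ps : seq (nat -> Prop)) k : first_oldest Ps k ->
  foldr (fun P acc => P k \/ acc) False Ps.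
Proof.
elim: Ps => [//|P Ps IH] /= [[_ /oldestP H]|[_ H]]; [by left | by right; apply: IH].
Qed.

Lemma unit_nz u i : coord (unitv u) i != 0 -> i = u.
Proof. by rewrite coord_unitv /dl; case: (eqVneq i u) => // _; rewrite eqxx. Qed.

Lemma addv_nz u v i : coord (addv u v) i != 0 -> coord u i != 0 \/ coord v i != 0.
Proof.
rewrite coord_addv; case: (eqVneq (coord u i) 0) => [->|H]; [rewrite add0r; by right | by left].
Qed.

Lemma dec_last S u : decoded (rcons S (unitv u)) u.
Proof.
apply/decodedE; apply: spanf_ext (spanf_last S (unitv u)) => i; by rewrite coord_unitv.
Qed.

Lemma dec_sub S v m k : decoded S m -> (forall i, coord v i = dl m i + dl k i) ->
  decoded (rcons S v) k.
Proof.
move=> /decodedE Hm Hv; apply/decodedE.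
have := spanfB (spanf_last S v) (spanf_rcons v Hm).
by apply: spanf_ext => i; rewrite Hv addrC addKr.
Qed.

Section Cases.
Variables (s : state) (n : nat).
Hypothesis HI : Inv s.
Let m := mm s.
Let KN := know s (lN s).
Let KD := know s (lD s).

Lemma decN_le k : decoded KN k -> (k <= m)%N.
Proof. move=> H; case: HI => _ Hs _ _ _; exact: decoded_le (Hs (lN s)) H. Qed.
Lemma heardD_le k : heard KD k -> (k <= m)%N.
Proof. move=> H; case: HI => _ Hs _ _ _; exact: heard_le (Hs (lD s)) H. Qed.
Lemma decD_le k : decoded KD k -> (k <= m)%N.
Proof. by move/decoded_heard; apply: heardD_le. Qed.

Lemma S6_le k : S6 n s k -> (k <= m)%N.
Proof. rewrite /S6 /Uset /=; case=> [[H|[-> _]] _]; [exact: ltnW H | done]. Qed.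

Lemma Dgood_all v : (forall i, coord v i != 0 -> decoded KN i \/ decoded (rcons KD v) i) ->
  Dgood s (Some v).
Proof.
move=> H w [<-]; case: (classic (nonempty (S5 s))) => [[k Hk]|Hne].
  by exists k; split; [left | move=> i Hi _; apply: H].
by exists 0%N; split; [right | move=> i Hi _; apply: H].
Qed.

Lemma unit_ok u : (u <= m)%N -> X1 s (Some (unitv u)) /\ Nsafe s (Some (unitv u)) /\
  Dgood s (Some (unitv u)).
Proof.
move=> Hu; split; [|split].
- move=> v [<-] k Hk; apply/eqP; apply: contraT => /unit_nz E.
  by move: Hk; rewrite E ltnNge Hu.
- by exists u => v [<-] i Hi /unit_nz E; move: Hi; rewrite E eqxx.
- by apply: Dgood_all => i /unit_nz ->; right; apply: dec_last.
Qed.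

Lemma comb_X1 a c b : (a <= m)%N -> (b <= m)%N -> X1 s (Some (comb a c b)).
Proof.
move=> Ha Hb v [<-] k Hk; apply/eqP; apply: contraT => /coord_comb_nz [] E;
  by move: Hk; rewrite E ltnNge ?Ha ?Hb.
Qed.

Lemma comb_Nsafe a c b : decoded KN a -> Nsafe s (Some (comb a c b)).
Proof.
move=> Ha; exists b => v [<-] i Hi /coord_comb_nz [->//|E].
by move: Hi; rewrite E eqxx.
Qed.

Lemma shape_comb_ok a b : decoded KN a -> decoded KD b ->
  X1 s (Some (comb a 1 b)) /\ Nsafe s (Some (comb a 1 b)) /\ Dgood s (Some (comb a 1 b)).
Proof.
move=> Ha Hb; split; [|split].
- by apply: comb_X1; [apply: decN_le | apply: decD_le].
- exact: comb_Nsafe.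
- apply: Dgood_all => i /coord_comb_nz [->|->]; first by left.
  by right; apply: decoded_rcons.
Qed.

Definition Shape (y : option vec) :=
  y = None \/ (exists a b, y = Some (comb a 1 b) /\ decoded KN a /\ decoded KD b) \/
  (exists k, y = Some (unitv k) /\ (k <= m)%N).

Lemma case1_shape y : case1 n s y -> Shape y.
Proof.
rewrite /case1; cbv zeta.
case=> [[_ [_ [a [b [/oldestP Ha [/oldestP Hb ->]]]]]]|
       [[_ [_ [_ [a [b [/oldestP Ha [/oldestP Hb ->]]]]]]]|
       [[_ [_ [k [Hk ->]]]]|[_ ->]]]].
- by right; left; exists a, b; split => //; split; [case: Ha | case: Hb].
- by right; left; exists a, b; split => //; split; [case: Ha | case: Hb].
- right; right; exists k; split => //; move: (fo_mem Hk) => /=.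
  case=> [[[/heardD_le //]]|[/S6_le //|[[/decN_le //]|[[/decN_le //]|[[/decD_le //]|[]]]]]].
- by left.
Qed.

Lemma shape_ok y : Shape y -> X1 s y /\ Nsafe s y /\ Dgood s y.
Proof.
case=> [->|[[a [b [-> [Ha Hb]]]]|[k [-> Hk]]]]; last exact: unit_ok.
  by split; [|split]; [|exists 0%N|] => v.
exact: shape_comb_ok.
Qed.

Lemma comb_mk c k : decoded KN m ->
  (decoded KD k \/ S5 s k \/ (~ nonempty (S5 s) /\ S6 n s k)) ->
  X1 s (Some (comb m c k)) /\ Nsafe s (Some (comb m c k)) /\ Dgood s (Some (comb m c k)).
Proof.
move=> Hm Hk; split; [|split].
- apply: comb_X1 => //; case: Hk => [/decD_le //|[[[/heardD_le //]]|[_ /S6_le //]]].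
- exact: comb_Nsafe.
- case: Hk => [Hk|Hk].
    apply: Dgood_all => i /coord_comb_nz [->|->]; [by left | by right; apply: decoded_rcons].
  move=> v [<-]; exists k; split.
    by case: Hk => [H|[H _]]; [left | right].
  by move=> i /coord_comb_nz [->|->] Hi; [left | move: Hi; rewrite eqxx].
Qed.

Lemma fo_S456 k : first_oldest [:: S4 s; S5 s; S6 n s] k ->
  decoded KD k \/ S5 s k \/ (~ nonempty (S5 s) /\ S6 n s k).
Proof.
move/fo3 => [H|[[_ H]|[_ [H1 H2]]]]; [left | right; left | right; right] => //.
by move: H; rewrite /S4; cbv zeta => -[].
Qed.

Lemma transmit_ok x : transmit n s x -> X1 s x /\ (Nsafe s x \/ Bcase s x) /\ Dgood s x.
Proof.
rewrite /transmit; cbv zeta.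
case=> [[_ Hc]|[[_ [HS1 [y [Hc ->]]]]|[[_ [HS2 H]]|[[_ [HS3 H]]|[[_ [HS4 H]]|[_ [_ [_ [_ [_ ->]]]]]]]]]].
- by have [? [? ?]] := shape_ok (case1_shape Hc); split => //; split => //; left.
- move: HS1; rewrite /S1 /Dset; cbv zeta => -[HNm HDm].
  case: (case1_shape Hc) => [->|[[a [b [-> [Ha Hb]]]]|[k [-> Hk]]]].
  + by have [? [? ?]] := unit_ok (leqnn m); split => //; split => //; left.
  + split; [|split].
    * move=> v [<-] i Hi; apply/eqP; apply: contraT.
      case/addv_nz => [/unit_nz E|/coord_comb_nz [E|E]]; move: Hi; rewrite E.
      - by rewrite ltnn.
      - by rewrite ltnNge (decN_le Ha).
      - by rewrite ltnNge (decD_le Hb).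
    * left; exists b => v [<-] i Hi /addv_nz [/unit_nz ->|/coord_comb_nz [->|E]] //.
      by move: Hi; rewrite E eqxx.
    * apply: Dgood_all => i /addv_nz [/unit_nz ->|/coord_comb_nz [->|->]]; [by left|by left|].
      by right; apply: decoded_rcons.
  + split; [|split].
    * move=> v [<-] i Hi; apply/eqP; apply: contraT.
      case/addv_nz => [/unit_nz E|/unit_nz E]; move: Hi; rewrite E.
      - by rewrite ltnn.
      - by rewrite ltnNge Hk.
    * left; exists k => v [<-] i Hi /addv_nz [/unit_nz ->|/unit_nz E] //.
      by move: Hi; rewrite E eqxx.
    * apply: Dgood_all => i /addv_nz [/unit_nz ->|/unit_nz ->]; first by left.
      by right; apply: (dec_sub HDm) => j; rewrite coord_addv !coord_unitv.
- move: HS2; rewrite /S2 /Dset; cbv zeta => -[HNm _].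
  case: H => [[k [c [Hfo [_ [_ [_ ->]]]]]]|[_ ->]].
    by have [? [? ?]] := comb_mk (c%:R) HNm (fo_S456 Hfo); split => //; split => //; left.
  by have [? [? ?]] := unit_ok (leqnn m); split => //; split => //; left.
- move: HS3; rewrite /S3 /Dset; cbv zeta => -[HNm _].
  case: H => [[k [Hfo ->]]|[_ ->]].
    by have [? [? ?]] := comb_mk 1 HNm (fo_S456 Hfo); split => //; split => //; left.
  by have [? [? ?]] := unit_ok (leqnn m); split => //; split => //; left.
- move: HS4; rewrite /S4 /Dset; cbv zeta => -[HDm HNm].
  case: H => [[k [Hfo ->]]|[_ ->]]; last first.
    by have [? [? ?]] := unit_ok (leqnn m); split => //; split => //; left.
  have HX1 : (k <= m)%N -> X1 s (Some (comb m 1 k)) by move=> Hk; apply: comb_X1.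
  have HDg : (decoded KN k \/ decoded (rcons KD (comb m 1 k)) k) ->
      Dgood s (Some (comb m 1 k)).
    move=> Hk; apply: Dgood_all => i /coord_comb_nz [->|->] //.
    by right; apply: decoded_rcons.
  case/fo3: Hfo => [H|[[_ H]|[H2 [H3 H6]]]].
  + move: H; rewrite /S2 /Dset; cbv zeta => -[Hk _].
    split; [exact: HX1 (decN_le Hk)|split; [left|exact: HDg (or_introl Hk)]].
    exists m => v [<-] i Hi /coord_comb_nz [E|->] //; by move: Hi; rewrite E eqxx.
  + move: H; rewrite /S3 /Dset; cbv zeta => -[Hk _].
    split; [exact: HX1 (decN_le Hk)|split; [left|exact: HDg (or_introl Hk)]].
    exists m => v [<-] i Hi /coord_comb_nz [E|->] //; by move: Hi; rewrite E eqxx.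
  + split; [exact: HX1 (S6_le H6)|split; [right|]].
      exists k; split => //; split => //; split => //.
      move: H6; rewrite /S6 /Uset /Hset /Dset; cbv zeta => -[[//|[E _]] Hn].
      by case: Hn; left; rewrite E; apply: decoded_heard.
    apply: HDg; right; apply: (dec_sub HDm) => j.
    by rewrite coord_comb mul1r.
- by have [? [? ?]] := unit_ok (leqnn m); split => //; split => //; left.
Qed.

End Cases.

Lemma heard_nil k : ~ heard [::] k.
Proof. by case/heardE => v [/spanf_nil -> ]; rewrite eqxx. Qed.

Lemma inv_init s : is_init s -> Inv s.
Proof.
case=> Hk [HL [HN [HD Hm]]]; split.
- rewrite /= !inE -!val_eqE /=; by rewrite HL HN HD.
- by move=> i; rewrite Hk.
- by move=> k; rewrite Hm.
- by rewrite Hk => k /heard_nil.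
- by move=> a b [[]]; rewrite /Hset Hk => /heard_nil.
Qed.

Lemma inv_all (a : nat -> nat) (e : nat -> 'I_3 -> bool) (st : nat -> state) :
  is_init (st 0%N) ->
  (forall t, step (a t) (e t) (st t) (st t.+1)) -> forall t, Inv (st t).
Proof.
move=> H0 Hs; elim=> [|t IH]; first exact: inv_init.
have [x [Htr [Hk [Hm Hrel]]]] := Hs t.
have [H1 [H2 H3]] := transmit_ok IH Htr.
exact: post IH H1 H2 H3 Hk Hm Hrel.
Qed.

Theorem theorem12 (a : nat -> nat) (e : nat -> 'I_3 -> bool) (st : nat -> state) :
  {homo a : t1 t2 / (t1 <= t2)%N} ->
  is_init (st 0%N) ->
  (forall t, step (a t) (e t) (st t) (st t.+1)) ->
  forall t, (0 < t)%N ->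
    ~ unsolved_nonempty (know (st t) (lN (st t))) \/
    ~ unsolved_nonempty (know (st t) (lD (st t))).
Proof.
move=> _ H0 Hs t _; left; apply/solvedE.
by case: (inv_all H0 Hs t).
Qed.
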